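(* Let $G$ be an equimatchable graph and let $k$ be an integer with $1<k\leq\nu(G)$. Then $I(G)^{[k]}:I(G)^{[k-1]}=I(G)^{[k]}$.
   Context: A finite simple graph is equimatchable if every maximal (by inclusion) matching is a maximum matching. Vertices are identified with variables of $S=K[x_1,\ldots,x_n]$ ($K$ a field), edges with degree-2 monomials. $I(G)^{[k]}$ is the ideal generated by all products $e_1\cdots e_k$ over $k$-matchings of $G$; $I(G)^{[1]}=I(G)$ is the edge ideal. $\nu(G)$ is the matching number. *)

(* Defs.v *)
From HB Require Import structures.
From mathcomp Require Import all_boot all_order all_algebra.
Set Implicit Arguments. Unset Strict Implicit. Unset Printing Implicit Defensive.
Import GRing.Theory.
Local Open Scope ring_scope.

(* The polynomial ring S = K[x_0,...,x_{n-1}], built as iterated univariate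
   polynomial rings: mpoly K 0 = K, mpoly K (m+1) = (mpoly K m)[x_m]. *)
Fixpoint mpoly (K : fieldType) (n : nat) : comNzRingType :=
  if n is m.+1 then ({poly mpoly K m} : comNzRingType) else (K : comNzRingType).

(* the variable x_i of mpoly K n (i < n); 0 if i >= n (never used) *)
Fixpoint mvar (K : fieldType) (n : nat) (i : nat) : mpoly K n :=
  match n return mpoly K n with
  | 0 => 0
  | m.+1 => if i == m then ('X : {poly mpoly K m}) else (mvar K m i)%:P
  end.

Definition x_ (K : fieldType) (n : nat) (i : 'I_n) : mpoly K n := mvar K n i.

Definition in_ideal (R : comNzRingType) (gs : seq R) (f : R) : Prop :=
  exists c : 'I_(size gs) -> R, f = \sum_(i < size gs) c i * gs`_i.

Definition in_colon (R : comNzRingType) (I J : seq R) (f : R) : Prop :=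
  forall g, in_ideal J g -> in_ideal I (f * g).

Definition simple_graph (n : nat) (E : {set {set 'I_n}}) : Prop :=
  forall e, e \in E -> #|e| = 2%N.

Definition is_matching (n : nat) (E M : {set {set 'I_n}}) : bool :=
  (M \subset E) && trivIset M.

Definition is_maximal_matching (n : nat) (E M : {set {set 'I_n}}) : bool :=
  is_matching E M &&
  [forall e in E, (e \notin M) ==> ~~ is_matching E (e |: M)].

Definition matching_number (n : nat) (E : {set {set 'I_n}}) : nat :=
  \max_(M : {set {set 'I_n}} | is_matching E M) #|M|.

Definition is_maximum_matching (n : nat) (E M : {set {set 'I_n}}) : bool :=
  is_matching E M && (#|M| == matching_number E).

Definition equimatchable (n : nat) (E : {set {set 'I_n}}) : Prop :=
  forall M, is_maximal_matching E M -> is_maximum_matching E M.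

Definition edge_mon (K : fieldType) (n : nat) (e : {set 'I_n}) : mpoly K n :=
  \prod_(v in e) x_ K v.

Definition matching_mon (K : fieldType) (n : nat) (M : {set {set 'I_n}})
  : mpoly K n := \prod_(e in M) edge_mon K e.

(* generators of I(G)^[k]: the products e_1 ... e_k over k-matchings *)
Definition sqpow_gens (K : fieldType) (n : nat) (E : {set {set 'I_n}}) (k : nat)
  : seq (mpoly K n) :=
  map (@matching_mon K n)
      (enum [set M : {set {set 'I_n}} | is_matching E M & #|M| == k]).

(* Main.v *)
Require Import Defs.
From mathcomp Require Import all_boot all_order all_algebra.
From Stdlib Require Import Classical FunctionalExtensionality.
From mathcomp Require Import zify.
Set Implicit Arguments. Unset Strict Implicit. Unset Printing Implicit Defensive.

Lemma sub_card (T : finType) (A : {set T}) m :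
  (m <= #|A|)%N -> exists B : {set T}, B \subset A /\ #|B| = m.
Proof.
elim: m => [|m IH] H; first by exists set0; rewrite sub0set cards0.
have [B [BA cB]] := IH (ltnW H).
have : A :\: B != set0.
  by rewrite -cards_eq0 cardsD (setIidPr BA) cB subn_eq0 -ltnNge.
case/set0Pn => x /setDP[xA xB].
exists (x |: B); rewrite cardsU1 xB cB; split => //.
by rewrite subUset sub1set xA BA.
Qed.

Lemma between_card (T : finType) (P A : {set T}) m :
  P \subset A -> (#|P| <= m)%N -> (m <= #|A|)%N ->
  exists M : {set T}, [/\ P \subset M, M \subset A & #|M| = m].
Proof.
move=> PA Pm mA.
have : (m - #|P| <= #|A :\: P|)%N by rewrite cardsD (setIidPr PA) leq_sub2r.
case/sub_card => B [BAP cB].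
exists (P :|: B); split.
- exact: subsetUl.
- by rewrite subUset PA (subset_trans BAP) // subsetDl.
rewrite cardsU cB.
have -> : P :&: B = set0.
  apply/setP => x; rewrite !inE; apply/negP => /andP[xP xB].
  by move/subsetP: BAP => /(_ x xB); rewrite inE xP.
by rewrite cards0 subn0 subnKC.
Qed.

Lemma matching0 n (E : {set {set 'I_n}}) : is_matching E set0.
Proof.
rewrite /is_matching sub0set /=; apply/trivIsetP => A B; by rewrite inE.
Qed.

Lemma matchingS n (E M M' : {set {set 'I_n}}) :
  M' \subset M -> is_matching E M -> is_matching E M'.
Proof.
move=> sub /andP[ME tM]; apply/andP; split; first exact: subset_trans ME.
exact: trivIsetS tM.
Qed.

Lemma matching_le_nu n (E M : {set {set 'I_n}}) :
  is_matching E M -> (#|M| <= matching_number E)%N.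
Proof. by move=> H; rewrite /matching_number; exact: (leq_bigmax_cond M H). Qed.

Lemma cover_sub (T : finType) (P Q : {set {set T}}) :
  P \subset Q -> cover P \subset cover Q.
Proof.
move=> PQ; apply/bigcupsP => e eP; apply: bigcup_sup; exact: (subsetP PQ).
Qed.

Lemma sub_cover (T : finType) (P : {set {set T}}) e : e \in P -> e \subset cover P.
Proof. by move=> eP; apply: bigcup_sup. Qed.

Lemma card_bigcup_le (T I : finType) (A : {set I}) (F : I -> {set T}) :
  (#|\bigcup_(i in A) F i| <= \sum_(i in A) #|F i|)%N.
Proof.
elim/big_rec2: _ => [|i m U _ H]; first by rewrite cards0.
by rewrite (leq_trans (leq_card_setU (F i) U).1) ?leq_add2l.
Qed.

Lemma comb n (E : {set {set 'I_n}}) k (hG : simple_graph E) (heq : equimatchable E)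
  (hk1 : (0 < k)%N) (hk2 : (k <= matching_number E)%N) (S : {set 'I_n}) :
  (forall M, is_matching E M -> #|M| = k.-1 ->
     exists N, [/\ is_matching E N, #|N| = k & cover N \subset S :|: cover M]) ->
  exists N, [/\ is_matching E N, #|N| = k & cover N \subset S].
Proof.
move=> Hyp; apply: NNPP => Hno.
pose pr := fun P : {set {set 'I_n}} => is_matching E P && (cover P \subset S).
have pr0 : pr set0 by rewrite /pr matching0 /cover big_set0 sub0set.
case: (@arg_maxnP {set {set 'I_n}} set0 pr (fun P => #|P|) pr0) => P /andP[mP cPS] maxP.
have rk : (#|P| < k)%N.
  rewrite ltnNge; apply/negP => kP.
  have [P' [P'P cP']] := sub_card kP.
  apply: Hno; exists P'; split => //; first exact: matchingS mP.
  exact: subset_trans (cover_sub P'P) cPS.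
pose prQ := fun Q : {set {set 'I_n}} => is_matching E Q && (P \subset Q).
have prQP : prQ P by rewrite /prQ mP subxx.
case: (@arg_maxnP {set {set 'I_n}} P prQ (fun Q => #|Q|) prQP) => Q /andP[mQ PQ] maxQ.
have QE : Q \subset E by case/andP: mQ.
have tQ : trivIset Q by case/andP: mQ.
have maxlQ : is_maximal_matching E Q.
  rewrite /is_maximal_matching mQ /=; apply/forall_inP => e eE; apply/implyP => eQ.
  apply/negP => me.
  have := maxQ (e |: Q); rewrite /prQ me (subset_trans PQ (subsetUr _ _)) => /(_ isT).
  by rewrite cardsU1 eQ add1n /= ltnn.
have cQ : #|Q| = matching_number E by move: (heq _ maxlQ) => /andP[_ /eqP].
have e2 : forall e, e \in Q -> #|e| = 2 by move=> e eQ; apply: hG; exact: (subsetP QE).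
pose A := [set e in Q | e :&: S != set0].
have PA : P \subset A.
  apply/subsetP => e eP; rewrite inE (subsetP PQ) //=.
  have : e \subset S := subset_trans (sub_cover eP) cPS.
  by move/setIidPl => ->; rewrite -cards_eq0 e2 ?(subsetP PQ).
have AQ : A \subset Q by apply/subsetP => e; rewrite inE => /andP[].
case: (leqP k.-1 #|A|) => hA.
- have Pk1 : (#|P| <= k.-1)%N by rewrite -ltnS (prednK hk1).
  have [M [PM MA cM]] := between_card PA Pk1 hA.
  have mM : is_matching E M := matchingS (subset_trans MA AQ) mQ.
  have [N [mN cN covN]] := Hyp M mM cM.
  have tN : trivIset N by case/andP: mN.
  pose Nin := [set e in N | e \subset S].
  have NinN : Nin \subset N by apply/subsetP => e; rewrite inE => /andP[].
  have hin : (#|Nin| <= #|P|)%N.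
    apply: maxP; rewrite /pr (matchingS NinN mN) /=.
    by apply/bigcupsP => e; rewrite inE => /andP[].
  pose X := cover M :\: S.
  have hout : (#|N :\: Nin| <= #|X|)%N.
    pose f := fun e : {set 'I_n} => [pick x in e :&: X].
    have fSome : forall e, e \in N :\: Nin -> exists2 x, x \in e :&: X & f e = Some x.
      move=> e /setDP[eN]; rewrite inE eN /= => eS.
      rewrite /f; case: pickP => [x xeX|none]; first by exists x.
      exfalso; case/subsetPn: eS => x xe xS.
      have := subsetP covN x (subsetP (sub_cover eN) x xe).
      rewrite inE (negbTE xS) /= => xM.
      by have := none x; rewrite !inE xe xS xM.
    have inj : {in N :\: Nin &, injective f}.
      move=> e1 e3 h1 h3 E13; case: (fSome _ h1) => x1 /setIP[x1e1 _] f1.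
      case: (fSome _ h3) => x3 /setIP[x3e3 _] f3.
      rewrite f1 f3 in E13; case: E13 => E13; subst x3.
      apply/eqP; apply: contraT => ne.
      move/setDP: h1 => [h1 _]; move/setDP: h3 => [h3 _].
      have := trivIsetP tN e1 e3 h1 h3 ne.
      by move/disjointFr => /(_ x1 x1e1); rewrite x3e3.
    rewrite -(card_in_imset inj).
    apply: (@leq_trans #|[set Some x | x in X]|); last first.
      by rewrite card_imset //; exact: Some_inj.
    apply: subset_leq_card; apply/subsetP => o /imsetP[e he ->].
    by case: (fSome _ he) => x /setIP[_ xX] ->; exact: imset_f.
  have hX : (#|X| <= #|M :\: P|)%N.
    apply: (@leq_trans #|\bigcup_(e in M :\: P) (e :\: S)|).
      apply: subset_leq_card; apply/subsetP => x; rewrite inE => /andP[xS xM].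
      case/bigcupP: xM => e eM xe; apply/bigcupP; exists e; last by rewrite inE xS xe.
      rewrite inE eM andbT; apply/negP => eP; move/negP: xS; apply.
      exact: (subsetP (subset_trans (sub_cover eP) cPS)).
    apply: leq_trans (card_bigcup_le _ _) _.
    rewrite -sum1_card; apply: leq_sum => e; rewrite inE => /andP[_ eM].
    have : e \in A := subsetP MA _ eM.
    rewrite inE => /andP[eQ]; case/set0Pn => y /setIP[ye yS].
    have := cardsD1 y e; rewrite ye e2 // => h1.
    apply: (@leq_trans #|e :\ y|); last by move: h1; rewrite add1n => -[<-].
    apply: subset_leq_card; apply/subsetP => x; rewrite !inE => /andP[xS xe].
    rewrite xe andbT; apply: contraNneq xS => ->; exact: yS.
  have : (#|N| <= k.-1)%N.
    rewrite -(cardsID Nin N) (setIidPr NinN) -cM -(cardsID P M) (setIidPr PM).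
    exact: leq_add hin (leq_trans hout hX).
  by rewrite cN leqNgt ltn_predL hk1.
- have kQ : (k.-1 <= #|Q|)%N by rewrite cQ; exact: leq_trans (leq_pred k) hk2.
  have [M [AM MQ cM]] := between_card AQ (ltnW hA) kQ.
  have mM : is_matching E M := matchingS MQ mQ.
  have [N [mN cN covN]] := Hyp M mM cM.
  have tN : trivIset N by case/andP: mN.
  pose R := Q :\: M.
  have Rdis : forall e x, e \in R -> x \in e -> x \notin S :|: cover M.
    move=> e x; rewrite inE => /andP[eM eQ] xe.
    rewrite inE negb_or; apply/andP; split.
      apply/negP => xS; have : e \in A.
        by rewrite inE eQ; apply/set0Pn; exists x; rewrite inE xe xS.
      by move/(subsetP AM); rewrite (negbTE eM).
    apply/negP => /bigcupP[e' e'M xe'].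
    have e'Q := subsetP MQ _ e'M.
    have ne : e != e' by apply: contraNneq eM => ->.
    have := trivIsetP tQ e e' eQ e'Q ne.
    by move/disjointFr => /(_ x xe); rewrite xe'.
  have disNR : [disjoint cover N & cover R].
    rewrite disjoints_subset; apply/subsetP => x xN; rewrite inE.
    apply/negP => /bigcupP[e eR xe].
    by have := Rdis e x eR xe; rewrite (subsetP covN x xN).
  have mNR : is_matching E (N :|: R).
    apply/andP; split.
      rewrite subUset; case/andP: mN => -> _ /=.
      exact: subset_trans (subsetDl Q M) QE.
    exact: trivIsetU tN (trivIsetS (subsetDl Q M) tQ) disNR.
  have NR0 : N :&: R = set0.
    apply/setP => e; rewrite inE in_set0; apply/negP => /andP[eN eR].
    have : #|e| = 2 by apply: e2; exact: (subsetP (subsetDl Q M)).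
    move=> ce; have : e != set0 by rewrite -cards_eq0 ce.
    case/set0Pn => x xe.
    by have := Rdis e x eR xe; rewrite (subsetP covN x (subsetP (sub_cover eN) x xe)).
  have := matching_le_nu mNR; rewrite cardsU NR0 cards0 subn0 -cQ cN.
  rewrite cardsD (setIidPr MQ) cM => h.
  clear -h kQ hk1; lia.
Qed.

Import GRing.Theory.
Local Open Scope ring_scope.

Definition upd (s : nat -> bool) (i : nat) (b : bool) : nat -> bool :=
  fun x => if x == i then b else s x.

Fixpoint good (K : fieldType) (m : nat) : ((nat -> bool) -> Prop) -> mpoly K m -> Prop :=
  match m return ((nat -> bool) -> Prop) -> mpoly K m -> Prop with
  | 0 => fun P c => c = 0 \/ P (fun _ => false)
  | m'.+1 => fun P f => forall j : nat,
      good (fun s => P (upd s m' (j != 0%N))) ((f : {poly mpoly K m'})`_j)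
  end.

Lemma good_mono (K : fieldType) (m : nat) (P Q : (nat -> bool) -> Prop) (f : mpoly K m) :
  (forall s, P s -> Q s) -> good P f -> good Q f.
Proof.
elim: m P Q f => [|m IH] P Q f PQ /=.
  by case=> [->|/PQ]; [left|right].
move=> H j; apply: IH (H j) => s; exact: PQ.
Qed.

Lemma good0 (K : fieldType) (m : nat) (P : (nat -> bool) -> Prop) :
  good P (0 : mpoly K m).
Proof.
elim: m P => [|m IH] P /=; first by left.
by move=> j; rewrite coef0; apply: IH.
Qed.

Lemma goodD (K : fieldType) (m : nat) (P : (nat -> bool) -> Prop) (f g : mpoly K m) :
  good P f -> good P g -> good P (f + g).
Proof.
elim: m P f g => [|m IH] P f g /=.
  by case=> [->|Hp]; case=> [->|Hq]; rewrite ?addr0; (left + right).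
move=> Hf Hg j; rewrite coefD; exact: IH.
Qed.

Lemma good_sum (K : fieldType) (m : nat) (P : (nat -> bool) -> Prop) (I : Type)
   (r : seq I) (F : I -> mpoly K m) :
  (forall i, good P (F i)) -> good P (\sum_(i <- r) F i).
Proof.
move=> H; elim: r => [|a r IHr]; first by rewrite big_nil; exact: good0.
by rewrite big_cons; apply: goodD.
Qed.

Lemma good_and (K : fieldType) (m : nat) (P Q : (nat -> bool) -> Prop) (f : mpoly K m) :
  good P f -> good Q f -> good (fun s => P s /\ Q s) f.
Proof.
elim: m P Q f => [|m IH] P Q f /=.
  by case=> [->|Hp]; [left|case=> [->|Hq]; [left|right]].
move=> H1 H2 j; exact: IH (H1 j) (H2 j).
Qed.

Lemma good_true (K : fieldType) (m : nat) (f : mpoly K m) : good (fun _ => True) f.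
Proof.
elim: m f => [|m IH] f /=; first by right.
by move=> j; apply: good_mono (IH _).
Qed.

Definition monoP (P : (nat -> bool) -> Prop) :=
  forall s t : nat -> bool, (forall i, s i -> t i) -> P s -> P t.

Lemma monoP_upd P m b : monoP P -> monoP (fun s => P (upd s m b)).
Proof.
move=> HP s t st; apply: HP => i; rewrite /upd; case: (i == m) => //; exact: st.
Qed.

Lemma goodM (K : fieldType) (m : nat) (P : (nat -> bool) -> Prop) (g f : mpoly K m) :
  monoP P -> good P f -> good P (g * f).
Proof.
elim: m P g f => [|m IH] P g f HP /=.
  by case=> [->|Hp]; [left; rewrite mulr0|right].
move=> Hf j; rewrite coefM; apply: good_sum => i.
apply: IH; first exact: monoP_upd.
apply: good_mono (Hf (j - i)%N) => s; apply: HP => x; rewrite /upd.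
case: (x == m) => //; case: j i => [|j] [i Hi] //=.
Qed.

Lemma upd_same s m b c : upd (upd s m b) m c = upd s m c.
Proof. by apply: functional_extensionality => x; rewrite /upd; case: (x == m). Qed.

Lemma upd_comm s i m b c : i != m -> upd (upd s m b) i c = upd (upd s i c) m b.
Proof.
move=> Him; apply: functional_extensionality => x; rewrite /upd.
case: (eqVneq x i) => [->|]; last by [].
by rewrite (negbTE Him).
Qed.

Lemma good1 (K : fieldType) (m : nat) (P : (nat -> bool) -> Prop) :
  P (fun _ => false) -> good P (1 : mpoly K m).
Proof.
elim: m P => [|m IH] P HP /=; first by right.
move=> j; rewrite coef1; case: j => [|j] /=; last exact: good0.
apply: IH; congr P: HP; apply: functional_extensionality => x; rewrite /upd.
by case: (x == m).
Qed.

Lemma mvarS (K : fieldType) m i :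
  mvar K m.+1 i = if i == m then ('X : {poly mpoly K m}) else (mvar K m i)%:P.
Proof. by []. Qed.

Lemma good_mulX (K : fieldType) (m : nat) (P : (nat -> bool) -> Prop) (i : nat) (f : mpoly K m) :
  (i < m)%N -> good (fun s => P (upd s i true)) f -> good P (mvar K m i * f).
Proof.
elim: m P f => [|m IH] P f // Him Hf j; rewrite mvarS.
case: (eqVneq i m) => [Eim|Nim].
  subst i; rewrite coefXM; case: j => [|j] /=; first exact: good0.
  apply: good_mono (Hf j) => s; by rewrite upd_same.
rewrite coefCM; apply: IH.
  by move: Him; rewrite ltnS leq_eqVlt (negbTE Nim).
apply: good_mono (Hf j) => s; by rewrite (upd_comm _ _ _ Nim).
Qed.

Lemma good_divX (K : fieldType) (m : nat) (P : (nat -> bool) -> Prop) (i : nat) (f : mpoly K m) :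
  (i < m)%N -> good P (mvar K m i * f) -> good (fun s => P (upd s i true)) f.
Proof.
elim: m P f => [|m IH] P f // Him Hf j.
case: (eqVneq i m) => [Eim|Nim].
  subst i; move: (Hf j.+1); rewrite mvarS eqxx coefXM /=.
  apply: good_mono => s; by rewrite upd_same.
have Him' : (i < m)%N by move: Him; rewrite ltnS leq_eqVlt (negbTE Nim).
have := Hf j; rewrite mvarS (negbTE Nim) coefCM => H.
have := IH _ _ Him' H; apply: good_mono => s; by rewrite (upd_comm _ _ _ Nim).
Qed.

Lemma upd_orl (s : nat -> bool) a (l : seq nat) :
  upd (fun x => s x || (x \in l)) a true = (fun x => s x || (x \in a :: l)).
Proof.
apply: functional_extensionality => x; rewrite /upd in_cons.
by case: (x == a); rewrite ?orbT.
Qed.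

Lemma good_mulL (K : fieldType) (m : nat) (P : (nat -> bool) -> Prop) (l : seq nat) (f : mpoly K m) :
  all (fun i => (i < m)%N) l ->
  good (fun s => P (fun x => s x || (x \in l))) f ->
  good P ((\prod_(i <- l) mvar K m i) * f).
Proof.
elim: l P => [|a l IH] P /=.
  move=> _ H; rewrite big_nil mul1r; apply: good_mono H => s.
  by congr P; apply: functional_extensionality => x; rewrite orbF.
move=> /andP[Ha Hl] H; rewrite big_cons -mulrA; apply: good_mulX => //.
apply: (IH (fun s => P (upd s a true))) => //.
by apply: good_mono H => s; rewrite upd_orl.
Qed.

Lemma good_divL (K : fieldType) (m : nat) (P : (nat -> bool) -> Prop) (l : seq nat) (f : mpoly K m) :
  all (fun i => (i < m)%N) l ->
  good P ((\prod_(i <- l) mvar K m i) * f) ->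
  good (fun s => P (fun x => s x || (x \in l))) f.
Proof.
elim: l P => [|a l IH] P /=.
  move=> _; rewrite big_nil mul1r; apply: good_mono => s.
  by congr P; apply: functional_extensionality => x; rewrite orbF.
move=> /andP[Ha Hl]; rewrite big_cons -mulrA => /good_divX => /(_ Ha) H.
have := IH (fun s => P (upd s a true)) Hl H.
by apply: good_mono => s; rewrite upd_orl.
Qed.

Fixpoint mon (K : fieldType) (m : nat) (s : nat -> bool) : mpoly K m :=
  match m return mpoly K m with
  | 0 => 1
  | m'.+1 => ((mon K m' s)%:P * (if s m' then 'X else 1) : {poly mpoly K m'})
  end.

Lemma mon_ext (K : fieldType) (m : nat) (s t : nat -> bool) :
  (forall i, (i < m)%N -> s i = t i) -> mon K m s = mon K m t.
Proof.
elim: m => [|m IH] //= H.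
rewrite H // IH // => i Hi; apply: H; exact: ltnW.
Qed.

Lemma good_ideal (K : fieldType) (m : nat) (P : (nat -> bool) -> Prop)
  (J : mpoly K m -> Prop) (f : mpoly K m) :
  J 0 -> (forall a b, J a -> J b -> J (a + b)) -> (forall c a, J a -> J (c * a)) ->
  (forall s, (forall i, (m <= i)%N -> s i = false) -> P s -> J (mon K m s)) ->
  good P f -> J f.
Proof.
elim: m P J f => [|m IH] P J f J0 JD JM Jg /=.
  case=> [->|HP] //; rewrite -[f]mulr1; apply: JM.
  exact: (Jg (fun _ => false)).
move=> Hf.
rewrite -[f : {poly mpoly K m}]coefK poly_def.
elim/big_ind: _ => [||j _]; first exact: J0.
  by move=> a b Ha Hb; exact: (JD a b Ha Hb).
rewrite -mul_polyC.
apply: (IH _ (fun c => J (c%:P * 'X^j)) _ _ _ _ _ (Hf j)).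
- by rewrite mul0r.
- by move=> a b Ha Hb; rewrite polyCD mulrDl; apply: JD.
- by move=> c a Ha; rewrite polyCM -mulrA; apply: JM.
move=> s Hs HP.
have Hs' : forall i, (m.+1 <= i)%N -> upd s m (nat_of_ord j != 0%N) i = false.
  move=> i Hi; rewrite /upd; have -> : (i == m) = false.
    by apply/eqP => E; move: Hi; rewrite E ltnn.
  by apply: Hs; exact: ltnW.
have := Jg _ Hs' HP => /=.
rewrite (@mon_ext K m (upd s m (nat_of_ord j != 0%N)) s); last first.
  by move=> i Hi; rewrite /upd; have -> : (i == m) = false by rewrite ltn_eqF.
rewrite /upd eqxx; case: j {Hs' HP} => [[|j] Hj] /= H.
  by rewrite expr0 mulr1; rewrite mulr1 in H.
by rewrite exprS mulrA mulrC; apply: JM.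
Qed.

Lemma in_ideal0 (R : comNzRingType) (gs : seq R) : in_ideal gs 0.
Proof. by exists (fun _ => 0); rewrite big1 // => i _; rewrite mul0r. Qed.

Lemma in_idealD (R : comNzRingType) (gs : seq R) a b :
  in_ideal gs a -> in_ideal gs b -> in_ideal gs (a + b).
Proof.
case=> c1 ->; case=> c2 ->; exists (fun i => c1 i + c2 i).
by rewrite -big_split; apply: eq_bigr => i _; rewrite mulrDl.
Qed.

Lemma in_idealM (R : comNzRingType) (gs : seq R) c a :
  in_ideal gs a -> in_ideal gs (c * a).
Proof.
case=> c1 ->; exists (fun i => c * c1 i).
by rewrite mulr_sumr; apply: eq_bigr => i _; rewrite mulrA.
Qed.

Lemma in_ideal_mem (R : comNzRingType) (gs : seq R) x :
  x \in gs -> in_ideal gs x.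
Proof.
move=> xg; have Hi : (index x gs < size gs)%N by rewrite index_mem.
pose i0 := Ordinal Hi.
exists (fun i => if i == i0 then 1 else 0).
rewrite (bigD1 i0) //= eqxx mul1r big1 ?addr0; first by rewrite nth_index.
by move=> i /negbTE ->; rewrite mul0r.
Qed.

Lemma mon_prod (K : fieldType) (m : nat) (s : nat -> bool) :
  mon K m s = \prod_(i < m | s i) mvar K m i.
Proof.
elim: m => [|m IH]; first by rewrite big_ord0.
rewrite /= IH [RHS]big_mkcond [RHS]big_ord_recr /=.
congr (_ * _); last by rewrite eqxx.
rewrite rmorph_prod big_mkcond; apply: eq_bigr => i _ /=.
rewrite (ltn_eqF (ltn_ord i)); case: (s i) => //; rewrite polyC1.
Qed.

Definition Pk (n : nat) (E : {set {set 'I_n}}) (k : nat) (s : nat -> bool) : Prop :=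
  exists N, [/\ is_matching E N, #|N| = k & cover N \subset [set v : 'I_n | s v]].

Lemma Pk_mono n (E : {set {set 'I_n}}) k : monoP (Pk E k).
Proof.
move=> s t st [N [mN cN cov]]; exists N; split => //.
apply: subset_trans cov _; apply/subsetP => v; rewrite !inE; exact: st.
Qed.

Definition vlist n (N : {set {set 'I_n}}) : seq nat := map val (enum (cover N)).

Lemma vlistE n (N : {set {set 'I_n}}) (v : 'I_n) : (val v \in vlist N) = (v \in cover N).
Proof. by rewrite /vlist mem_map ?mem_enum //; exact: val_inj. Qed.

Lemma vlist_lt n (N : {set {set 'I_n}}) : all (fun i => (i < n)%N) (vlist N).
Proof. by rewrite /vlist all_map; apply/allP => v _ /=. Qed.

Lemma matching_mon_cover (K : fieldType) n (N : {set {set 'I_n}}) :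
  trivIset N -> matching_mon K N = \prod_(v in cover N) x_ K v.
Proof. move=> tN; rewrite big_trivIset //. Qed.

Lemma matching_mon_list (K : fieldType) n (N : {set {set 'I_n}}) :
  trivIset N -> matching_mon K N = \prod_(i <- vlist N) mvar K n i.
Proof.
by move=> tN; rewrite matching_mon_cover // -big_enum /vlist big_map.
Qed.

Lemma good_gen (K : fieldType) n (E : {set {set 'I_n}}) k (N : {set {set 'I_n}}) :
  is_matching E N -> #|N| = k -> good (Pk E k) (matching_mon K N).
Proof.
move=> mN cN; have tN : trivIset N by case/andP: mN.
rewrite matching_mon_list // -[X in good _ X]mulr1.
apply: good_mulL; first exact: vlist_lt.
apply: good1; exists N; split => //; apply/subsetP => v vN.
by rewrite inE /= vlistE.
Qed.

Lemma gens_mem (K : fieldType) n (E : {set {set 'I_n}}) k (N : {set {set 'I_n}}) :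
  is_matching E N -> #|N| = k -> matching_mon K N \in sqpow_gens K E k.
Proof.
move=> mN cN; rewrite /sqpow_gens; apply: map_f.
by rewrite mem_enum inE mN cN eqxx.
Qed.

Lemma ideal_good (K : fieldType) n (E : {set {set 'I_n}}) k (h : mpoly K n) :
  in_ideal (sqpow_gens K E k) h -> good (Pk E k) h.
Proof.
case=> c ->; apply: good_sum => i; apply: goodM; first exact: Pk_mono.
have := mem_nth 0 (ltn_ord i); rewrite {2}/sqpow_gens => /mapP[N].
rewrite mem_enum inE => /andP[mN /eqP cN] ->.
exact: good_gen.
Qed.

Lemma good_all (K : fieldType) m (T : eqType) (l : seq T) (Q : T -> (nat -> bool) -> Prop)
  (f : mpoly K m) :
  (forall x, x \in l -> good (Q x) f) -> good (fun s => forall x, x \in l -> Q x s) f.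
Proof.
elim: l => [|a l IH] H.
  by apply: good_mono (good_true f) => s _ x; rewrite in_nil.
have := good_and (H a (mem_head _ _)) (IH (fun x xl => H x (@mem_behead _ (a :: l) x xl))).
apply: good_mono => s [Ha Hl] x; rewrite in_cons => /orP[/eqP ->|]; [exact: Ha|exact: Hl].
Qed.

Unset Implicit Arguments.

Theorem theorem6p5 (K : fieldType) (n : nat) (E : {set {set 'I_n}})
  (hG : simple_graph E) (heq : equimatchable E) (k : nat)
  (hk1 : (1 < k)%N) (hk2 : (k <= matching_number E)%N) :
  forall f : mpoly K n,
    in_colon (sqpow_gens K E k) (sqpow_gens K E k.-1) f <->
    in_ideal (sqpow_gens K E k) f.
Proof.
move=> f; split; last first.
  move=> Hf g Hg; rewrite mulrC; exact: in_idealM.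
move=> Hcol.
have k0 : (0 < k)%N by apply: ltnW.
pose Ms := enum [set M : {set {set 'I_n}} | is_matching E M & #|M| == k.-1].
have H1 : forall M, M \in Ms -> good (fun s => Pk E k (fun x => s x || (x \in vlist M))) f.
  move=> M; rewrite mem_enum inE => /andP[mM /eqP cM].
  have tM : trivIset M by case/andP: mM.
  have := Hcol _ (in_ideal_mem (gens_mem K mM cM)).
  move/ideal_good; rewrite mulrC matching_mon_list //.
  apply: good_divL; exact: vlist_lt.
have H2 := good_all H1.
have H3 : good (Pk E k) f.
  apply: good_mono H2 => s Hs.
  apply: (@comb n E k hG heq k0 hk2 [set v : 'I_n | s v]) => M mM cM.
  have := Hs M; rewrite mem_enum inE mM cM eqxx => /(_ isT) [N [mN cN covN]].
  exists N; split => //; apply: subset_trans covN _; apply/subsetP => v.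
  by rewrite !inE vlistE.
apply: (good_ideal _ _ _ _ H3).
- exact: in_ideal0.
- exact: in_idealD.
- exact: in_idealM.
move=> s Hs [N [mN cN covN]].
have tN : trivIset N by case/andP: mN.
rewrite mon_prod (bigID (fun i => i \in cover N)) /= mulrC.
apply: in_idealM.
have -> : \prod_(i < n | s i && (i \in cover N)) mvar K n i = matching_mon K N.
  rewrite matching_mon_cover //; apply: eq_bigl => i.
  case iN: (i \in cover N); rewrite ?andbF ?andbT //.
  by have := subsetP covN i iN; rewrite inE.
apply: in_ideal_mem; exact: gens_mem.
Qed.
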